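(* Let $K\ge 2$, let $\mathcal{X}$ be an input space, let $\mathcal{Y}$ be the set of probability vectors in $\mathbb{R}^K$, and for $k\in\{1,\dots,K\}$ let $\vec{k}\in\mathcal{Y}$ denote the one-hot vector of label $k$. Let $f:\mathcal{X}\to\mathcal{Y}$ be a classifier whose output probability vectors have strictly positive entries, and let $\ell(\boldsymbol{p},\boldsymbol{y}):=-\sum_{k=1}^K\boldsymbol{y}[k]\log\boldsymbol{p}[k]$ be the cross-entropy loss. Let $\boldsymbol{y}\in\mathcal{Y}$ be a one-hot label vector, let $\widetilde{\boldsymbol{x}}\in\mathcal{X}$ be arbitrary (a perturbed version of a training input), let $0<\epsilon\le 2$, and let $k^\ast$ be a least likely label under $f(\widetilde{\boldsymbol{x}})$, i.e. $k^\ast\in\arg\min_{k} f(\widetilde{\boldsymbol{x}})[k]$. Define $$\rho(\widetilde{\boldsymbol{x}},\boldsymbol{y}):=\Big(1-\frac{\epsilon}{2}\Big)\boldsymbol{y}+\frac{\epsilon}{2}\vec{k^\ast}\in\mathcal{Y}.$$ Then $$\rho(\widetilde{\boldsymbol{x}},\boldsymbol{y})\in\arg\max_{\widetilde{\boldsymbol{y}}\in\mathcal{Y},\ \|\widetilde{\boldsymbol{y}}-\boldsymbol{y}\|_1\le\epsilon}\ \ell\big(f(\widetilde{\boldsymbol{x}}),\widetilde{\boldsymbol{y}}\big),$$ i.e. $\rho(\widetilde{\boldsymbol{x}},\boldsymbol{y})$ maximizes the cross-entropy loss of the prediction $f(\widetilde{\boldsymbol{x}})$ over all label distributions within $\mathrm{L}_1$-distance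 $\epsilon$ of $\boldsymbol{y}$.
   Context: Labels are represented as probability vectors over $\{1,\dots,K\}$; $\|\cdot\|_1$ is the $\mathrm{L}_1$ norm on $\mathbb{R}^K$. The vector $\rho(\widetilde{\boldsymbol{x}},\boldsymbol{y})$ (the ''adversarial label'') is obtained by shifting probability mass $\epsilon/2$ from the ground-truth label to the least likely predicted label. *)

(* Defs.v *)
From mathcomp Require Import all_boot all_order all_algebra.
From mathcomp Require Import all_classical all_reals exp.
Set Implicit Arguments. Unset Strict Implicit. Unset Printing Implicit Defensive.
Import Order.TTheory GRing.Theory Num.Theory.
Local Open Scope ring_scope.

(* label vectors over {1..K} are indexed by 'I_K *)
Definition is_prob (R : realType) (K : nat) (v : 'I_K -> R) : Prop :=
  (forall k, 0 <= v k) /\ \sum_(k < K) v k = 1.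

Definition onehot (R : realType) (K : nat) (k : 'I_K) : 'I_K -> R :=
  fun j => (j == k)%:R.

Definition CE (R : realType) (K : nat) (p y : 'I_K -> R) : R :=
  - \sum_(k < K) y k * ln (p k).

Definition l1dist (R : realType) (K : nat) (u v : 'I_K -> R) : R :=
  \sum_(k < K) `|u k - v k|.

(* Main.v *)
Require Import Defs.
From mathcomp Require Import all_boot all_order all_algebra.
From mathcomp Require Import all_classical all_reals exp.
From mathcomp Require Import ring lra.
Import Order.TTheory GRing.Theory Num.Theory.
Local Open Scope ring_scope.

Lemma sum_oh (R : realType) (K : nat) (k : 'I_K) (F : 'I_K -> R) :
  \sum_(j < K) @onehot R K k j * F j = F k.
Proof.
rewrite (bigD1 k) //= big1 ?addr0; first by rewrite /onehot eqxx mul1r.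
by move=> j /negbTE hj; rewrite /onehot hj mul0r.
Qed.

Lemma sum_oh1 (R : realType) (K : nat) (k : 'I_K) :
  \sum_(j < K) @onehot R K k j = 1.
Proof.
rewrite -[RHS](@sum_oh R K k (fun _ => 1)); apply: eq_bigr => j _; by rewrite mulr1.
Qed.

Lemma oh_ge0 (R : realType) (K : nat) (k j : 'I_K) : 0 <= @onehot R K k j.
Proof. by rewrite /onehot; case: (j == k). Qed.

Theorem theorem1 (R : realType) (K : nat) (X : Type) (f : X -> 'I_K -> R)
  (hK : (2 <= K)%N)
  (hf : forall x, is_prob (f x) /\ (forall k, 0 < f x k))
  (y : 'I_K -> R) (hy : exists k0 : 'I_K, y = @onehot R K k0)
  (xt : X) (eps : R) (heps : 0 < eps <= 2)
  (kstar : 'I_K) (hkstar : forall k, f xt kstar <= f xt k) :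
  let rho := fun j => (1 - eps / 2) * y j + eps / 2 * @onehot R K kstar j in
  [/\ is_prob rho, l1dist rho y <= eps &
      forall yt : 'I_K -> R, is_prob yt -> l1dist yt y <= eps ->
        CE (f xt) yt <= CE (f xt) rho].
Proof.
move=> rho; case: hy => k0 hy0; subst y.
have rhoE : forall j, rho j = (1 - eps / 2) * @onehot R K k0 j + eps / 2 * @onehot R K kstar j by [].
case/andP: heps => he0 he2.
have he : 0 <= 1 - eps / 2 by lra.
have he' : 0 <= eps / 2 by lra.
split.
- split.
  + move=> j; rewrite /rho /=; have h1 := @oh_ge0 R K k0 j; have h2 := @oh_ge0 R K kstar j; apply: addr_ge0; apply: mulr_ge0 => //.
  + under eq_bigr => j _ do rewrite rhoE; rewrite big_split /= -!mulr_sumr !sum_oh1; lra.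
- rewrite /l1dist.
  have -> : \sum_(k < K) `|rho k - @onehot R K k0 k| =
    \sum_(k < K) eps / 2 * `|@onehot R K kstar k - @onehot R K k0 k|.
    apply: eq_bigr => j _; rewrite rhoE.
    have -> : (1 - eps / 2) * @onehot R K k0 j + eps / 2 * @onehot R K kstar j -
      @onehot R K k0 j = eps / 2 * (@onehot R K kstar j - @onehot R K k0 j) by ring.
    by rewrite normrM (ger0_norm he').
  rewrite -mulr_sumr.
  have : \sum_(k < K) `|@onehot R K kstar k - @onehot R K k0 k| <= 2.
    apply: (le_trans (y := \sum_(k < K) (@onehot R K kstar k + @onehot R K k0 k))).
      apply: ler_sum => j _.
      apply: le_trans (ler_normB _ _) _.
      by rewrite !ger0_norm ?oh_ge0.
    rewrite big_split /= !sum_oh1; lra.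
  move=> h; have : eps / 2 * \sum_(k < K) `|@onehot R K kstar k - @onehot R K k0 k|
     <= eps / 2 * 2 by apply: ler_wpM2l.
  lra.
- move=> yt [yt0 yt1] hd.
  set c := fun j => - ln (f xt j).
  have hCE : forall v, CE (f xt) v = \sum_(j < K) v j * c j.
    move=> v; rewrite /CE -sumrN; apply: eq_bigr => j _; by rewrite /c mulrN.
  have hc : forall j, c j <= c kstar.
    move=> j; rewrite /c lerN2 ler_ln ?posrE; try exact: (hf xt).2.
    exact: hkstar.
  rewrite !hCE.
  have -> : \sum_(j < K) rho j * c j = (1 - eps / 2) * c k0 + eps / 2 * c kstar.
    under eq_bigr => j _ do rewrite rhoE mulrDl -!mulrA.
    by rewrite big_split /= -!mulr_sumr !sum_oh !mulrA.
  set S := \sum_(j < K | j != k0) yt j.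
  have hS : yt k0 + S = 1 by rewrite -yt1 (bigD1 k0).
  have hS0 : 0 <= S by apply: sumr_ge0.
  have hd2 : l1dist yt (@onehot R K k0) = (1 - yt k0) + S.
    rewrite /l1dist (bigD1 k0) //= /onehot eqxx.
    have -> : (true%:R : R) = 1 by []. rewrite ler0_norm; last by rewrite subr_le0 -hS lerDl.
    congr (_ + _); first by ring.
    apply: eq_bigr => j /negbTE ->; by rewrite subr0 ger0_norm.
  have hSe : S <= eps / 2 by lra.
  have hle : \sum_(j < K | j != k0) yt j * c j <= S * c kstar.
    rewrite /S mulr_suml; apply: ler_sum => j _; apply: ler_wpM2l => //.
  rewrite (bigD1 k0) //=.
  have hck := hc k0.
  have hyk : yt k0 = 1 - S by rewrite -hS addrK.
  rewrite hyk.
  apply: (le_trans (y := (1 - S) * c k0 + S * c kstar)); first by rewrite lerD2l.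
  rewrite -subr_ge0.
  have -> : (1 - eps / 2) * c k0 + eps / 2 * c kstar - ((1 - S) * c k0 + S * c kstar)
     = (eps / 2 - S) * (c kstar - c k0) by ring.
  by apply: mulr_ge0; rewrite subr_ge0.
Qed.
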